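(* Let $0<\theta<\frac{\pi}{4}$ and let $N\ge 2$ be an integer. Let $|\psi_{\mathrm{GGHZ}}\rangle=\cos\theta|000\rangle+\sin\theta|111\rangle$ and $|\psi_{\mathrm{GHZ}}\rangle=\frac{1}{\sqrt2}(|000\rangle+|111\rangle)$ be three-qubit states on $\mathcal H_A\otimes\mathcal H_B\otimes\mathcal H_C$. For $x\in\{0,1,2\}$ and $a\in\{0,1\}$ let $P_{a|x}$ be the projector onto the eigenvector of $\sigma_x$ (if $x=0$), $\sigma_y$ (if $x=1$), $\sigma_z$ (if $x=2$) with eigenvalue $(-1)^a$. Define the assemblages on Bob–Charlie $$\sigma^{\mathrm{GGHZ}}_{a|x}=\mathrm{Tr}_A\big[(P_{a|x}\otimes\mathbb 1\otimes\mathbb 1)|\psi_{\mathrm{GGHZ}}\rangle\langle\psi_{\mathrm{GGHZ}}|\big],\qquad \sigma^{\mathrm{GHZ}}_{a|x}=\mathrm{Tr}_A\big[(P_{a|x}\otimes\mathbb 1\otimes\mathbb 1)|\psi_{\mathrm{GHZ}}\rangle\langle\psi_{\mathrm{GHZ}}|\big].$$ Let $P_{\mathrm{fail}}=(1-2\sin^2\theta)^{N-1}$, $P_{\mathrm{success}}=1-P_{\mathrm{fail}}$, and let $\sigma^{\mathrm{dist}}_{a|x}=P_{\mathrm{success}}\,\sigma^{\mathrm{GHZ}}_{a|x}+P_{\mathrm{fail}}\,\sigma^{\mathrm{GGHZ}}_{a|x}$ be the assemblage obtained on average from $N$ copies of $\{\sigma^{\mathrm{GGHZ}}_{a|x}\}$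 by the distillation protocol described in the context. Then $$\mathcal F_A\big(\{\sigma^{\mathrm{dist}}_{a|x}\}_{a,x},\{\sigma^{\mathrm{GHZ}}_{a|x}\}_{a,x}\big)=\sqrt{1-\tfrac12(1-\sin2\theta)(\cos2\theta)^{N-1}}.$$
   Context: $\sigma_x,\sigma_y,\sigma_z$ are the Pauli matrices in the computational basis $\{|0\rangle,|1\rangle\}$. For positive semidefinite operators $A,B$, the fidelity is $\mathcal F(A,B)=\mathrm{Tr}\big[\sqrt{\sqrt A B\sqrt A}\big]$. For two assemblages $\{\sigma_{a|x}\}$, $\{\tau_{a|x}\}$ (collections of unnormalized states indexed by Alice's input $x$ and outcome $a$), the assemblage fidelity is $\mathcal F_A(\{\sigma_{a|x}\},\{\tau_{a|x}\})=\min_x\sum_a\mathcal F(\sigma_{a|x},\tau_{a|x})$. The distillation protocol (one-sided device-independent setting: Alice untrusted, Bob and Charlie trusted): on each of the first $N-1$ copies the trusted party/parties apply a local two-outcome filter (e.g. Bob alone with Kraus operators $K_0=\mathrm{diag}(\tan\theta,1)$, $K_1=\mathrm{diag}(\sqrt{1-\tan^2\theta},0)$); outcome $0$, which occurs with probability $2\sin^2\theta$ per copy, transforms the copy into $\{\sigma^{\mathrm{GHZ}}_{a|x}\}$; copies with outcome $1$ are discarded, and if all first $N-1$ copies fail the untouched $N$-th copy is kept. Thus on average the output is the convex combination $\sigma^{\mathrm{dist}}$ defined in the claim. *)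

(* Defs.v *)
From mathcomp Require Import all_boot all_order all_algebra.
From mathcomp Require Import boolp classical_sets reals trigo.
From mathcomp.real_closed Require Import complex.
Set Implicit Arguments. Unset Strict Implicit. Unset Printing Implicit Defensive.
Import GRing.Theory Num.Theory.
Local Open Scope ring_scope.
Local Open Scope complex_scope.

Section QInfo.
Variable R : realType.
Local Notation C := R[i].

Definition hc m n (M : 'M[C]_(m, n)) : 'M[C]_(n, m) := (map_mx conjc M)^T.

Definition psd n (A : 'M[C]_n) : Prop :=
  hc A = A /\ forall v : 'cV[C]_n, 0 <= (hc v *m A *m v) 0 0.

(* the (unique) positive semidefinite square root of a PSD matrix
   (chosen classically; 0 if no PSD square root exists) *)
Definition mxsqrt n (A : 'M[C]_n) : 'M[C]_n :=
  xget 0 [set S : 'M[C]_n | psd S /\ S *m S = A].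

Definition fidelity n (A B : 'M[C]_n) : C :=
  \tr (mxsqrt (mxsqrt A *m B *m mxsqrt A)).

Definition kron m1 n1 m2 n2 (A : 'M[C]_(m1, n1)) (B : 'M[C]_(m2, n2))
  : 'M[C]_(m1 * m2, n1 * n2) :=
  \sum_(i < m1) \sum_(j < n1) \sum_(k < m2) \sum_(l < n2)
     (A i j * B k l) *: delta_mx (mxvec_index i k) (mxvec_index j l).

Definition ptrace1 m n (M : 'M[C]_(m * n)) : 'M[C]_n :=
  \matrix_(j < n, k < n) \sum_(i < m) M (mxvec_index i j) (mxvec_index i k).

Definition q0 : 'I_2 := ord0.
Definition q1 : 'I_2 := ord_max.

Definition sigma_x : 'M[C]_2 := delta_mx q0 q1 + delta_mx q1 q0.
Definition sigma_y : 'M[C]_2 := (- 'i) *: delta_mx q0 q1 + 'i *: delta_mx q1 q0.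
Definition sigma_z : 'M[C]_2 := delta_mx q0 q0 - delta_mx q1 q1.

Definition pauli (x : 'I_3) : 'M[C]_2 :=
  if val x == 0%N then sigma_x else if val x == 1%N then sigma_y else sigma_z.

(* projector onto the eigenspace of the Pauli matrix with eigenvalue (-1)^a
   (Pauli matrices square to 1 with eigenvalues +-1, so this is the spectral projector) *)
Definition proj (a : 'I_2) (x : 'I_3) : 'M[C]_2 :=
  2^-1 *: (1%:M + (-1) ^+ a *: pauli x).

Definition ket3 (a b c : 'I_2) : 'cV[C]_(2 * (2 * 2)) :=
  delta_mx (mxvec_index a (mxvec_index b c)) 0.

Definition psi_GGHZ (theta : R) : 'cV[C]_(2 * (2 * 2)) :=
  (cos theta)%:C *: ket3 q0 q0 q0 + (sin theta)%:C *: ket3 q1 q1 q1.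

Definition psi_GHZ : 'cV[C]_(2 * (2 * 2)) :=
  (Num.sqrt (2 : R))^-1%:C *: (ket3 q0 q0 q0 + ket3 q1 q1 q1).

Definition assemblage (psi : 'cV[C]_(2 * (2 * 2))) (x : 'I_3) (a : 'I_2)
  : 'M[C]_(2 * 2) :=
  ptrace1 (kron (proj a x) (1%:M : 'M[C]_(2 * 2)) *m (psi *m hc psi)).

Definition sigma_GGHZ (theta : R) := assemblage (psi_GGHZ theta).
Definition sigma_GHZ := assemblage psi_GHZ.

Definition P_fail (theta : R) (N : nat) : R := (1 - 2 * sin theta ^+ 2) ^+ (N.-1).
Definition P_success (theta : R) (N : nat) : R := 1 - P_fail theta N.

Definition sigma_dist (theta : R) (N : nat) (x : 'I_3) (a : 'I_2) : 'M[C]_(2 * 2) :=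
  (P_success theta N)%:C *: sigma_GHZ x a + (P_fail theta N)%:C *: sigma_GGHZ theta x a.

(* assemblage fidelity F_A = min_x sum_a F(sigma_{a|x}, tau_{a|x}), x in {0,1,2}
   (min taken in the order of C; all fidelities are nonnegative reals) *)
Definition assemblage_fidelity (s t : 'I_3 -> 'I_2 -> 'M[C]_(2 * 2)) : C :=
  let g := fun x : 'I_3 => \sum_(a < 2) fidelity (s x a) (t x a) in
  Num.min (g (inord 0)) (Num.min (g (inord 1)) (g (inord 2))).

End QInfo.

(* Main.v *)
Require Import Defs.
From mathcomp Require Import all_boot all_order all_algebra.
From mathcomp Require Import boolp classical_sets reals trigo.
From mathcomp.real_closed Require Import complex.
From mathcomp Require Import ring lra.
Import GRing.Theory Num.Theory.
Local Open Scope ring_scope.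
Local Open Scope complex_scope.
Set Implicit Arguments. Unset Strict Implicit. Unset Printing Implicit Defensive.

Section S.
Variable R : realType.
Local Notation C := R[i].

Lemma hcE m n (M : 'M[C]_(m, n)) i j : hc M i j = (M j i)^*.
Proof. by rewrite /hc !mxE. Qed.

Lemma hcK m n (M : 'M[C]_(m, n)) : hc (hc M) = M.
Proof. by apply/matrixP => i j; rewrite !hcE conjcK. Qed.

Lemma hcM m n p (A : 'M[C]_(m, n)) (B : 'M[C]_(n, p)) : hc (A *m B) = hc B *m hc A.
Proof. by rewrite /hc map_mxM trmx_mul. Qed.

Lemma hcD m n (A B : 'M[C]_(m, n)) : hc (A + B) = hc A + hc B.
Proof. by apply/matrixP => i j; rewrite !mxE rmorphD. Qed.

Lemma hcZ m n a (A : 'M[C]_(m, n)) : hc (a *: A) = conjc a *: hc A.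
Proof. by apply/matrixP => i j; rewrite !mxE rmorphM. Qed.

Lemma hcN m n (A : 'M[C]_(m, n)) : hc (- A) = - hc A.
Proof. by apply/matrixP => i j; rewrite !mxE rmorphN. Qed.

Lemma hc1 n : hc (1%:M : 'M[C]_n) = 1%:M.
Proof. by apply/matrixP => i j; rewrite !mxE conjc_nat eq_sym. Qed.

Lemma ge0_conj (x : C) : 0 <= x -> conjc x = x.
Proof. by case: x => a b /ger0_Im /= ->; rewrite /conjc oppr0. Qed.

Lemma sqrtc_uniq (x y : C) : 0 <= y -> y ^+ 2 = x -> y = sqrtc x.
Proof.
move=> y0 yx; apply/eqP; rewrite -(@eqrXn2 _ 2) //; last by rewrite sqrtc_ge0 -yx exprn_ge0.
by rewrite sqr_sqrtc yx.
Qed.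

Lemma norm0 m n (X : 'M[C]_(m, n)) : hc X *m X = 0 -> X = 0.
Proof.
move=> H; apply/matrixP => i j; rewrite [RHS]mxE.
have := congr1 (fun M : 'M[C]_n => M j j) H; rewrite !mxE => /psumr_eq0P H2.
have P0 : forall k : 'I_m, true -> 0 <= hc X j k * X k j.
  by move=> k _; rewrite hcE mulrC mulcJ_ge0.
have := H2 P0 i isT.
rewrite hcE => /eqP; rewrite mulf_eq0 conjc_eq0 orbb => /eqP.
by [].
Qed.

Lemma nn_ge0 n (X : 'cV[C]_n) : 0 <= (hc X *m X) 0 0.
Proof. by rewrite mxE sumr_ge0 // => i _; rewrite hcE mulrC mulcJ_ge0. Qed.

Lemma outer_ge0 n (X v : 'cV[C]_n) : 0 <= (hc v *m (X *m hc X) *m v) 0 0.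
Proof.
have -> : hc v *m (X *m hc X) *m v = hc (hc X *m v) *m (hc X *m v).
  by rewrite hcM hcK !mulmxA.
exact: nn_ge0.
Qed.

Lemma rank1_tr n (Y : 'M[C]_n) (X : 'cV[C]_n) :
  psd Y -> Y *m Y = X *m hc X -> \tr Y = sqrtc ((hc X *m X) 0 0).
Proof.
move=> [hY pY] YY.
set nn := (hc X *m X) 0 0.
have XX : hc X *m X = nn%:M by rewrite [LHS]mx11_scalar.
have nn0 : 0 <= nn by exact: nn_ge0.
have [nz|nnz] := eqVneq nn 0.
  have X0 : X = 0 by apply: norm0; rewrite XX nz raddf0.
  have Y0 : Y = 0 by apply: norm0; rewrite hY YY X0 mul0mx.
  by rewrite Y0 mxtrace0 nz sqrtc0.
have X0 : X != 0.
  by apply: contra nnz => /eqP X0; rewrite /nn X0 mulmx0 mxE.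
set mu := (hc X *m Y *m X) 0 0.
have mu0 : 0 <= mu by exact: pY.
have YX : nn *: (Y *m X) = mu *: X.
  have -> : nn *: (Y *m X) = Y *m X *m (hc X *m X) by rewrite XX mul_mx_scalar.
  have -> : mu *: X = X *m (hc X *m Y *m X) by rewrite [hc X *m Y *m X]mx11_scalar mul_mx_scalar.
  have e : Y *m (X *m hc X) = (X *m hc X) *m Y by rewrite -YY mulmxA.
  by rewrite !mulmxA -(mulmxA Y) e.
set lam := mu / nn.
have YX' : Y *m X = lam *: X.
  by rewrite /lam mulrC -scalerA -YX scalerA mulVf // scale1r.
have lam0 : 0 <= lam by rewrite divr_ge0.
have lam2 : lam ^+ 2 = nn.
  have e1 : Y *m Y *m X = lam ^+ 2 *: X by rewrite -mulmxA YX' -scalemxAr YX' scalerA expr2.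
  have e2 : Y *m Y *m X = nn *: X by rewrite YY -mulmxA XX mul_mx_scalar.
  apply/eqP; rewrite -subr_eq0; apply/eqP.
  have : (lam ^+ 2 - nn) *: X = 0 by rewrite scalerBl -e1 -e2 subrr.
  by move/eqP; rewrite scaler_eq0 (negbTE X0) orbF => /eqP.
have YYY : Y *m (Y *m Y) = lam *: (Y *m Y).
  by rewrite YY mulmxA YX' -scalemxAl.
set Z := Y *m Y - lam *: Y.
have hZ : hc Z = Z.
  rewrite /Z hcD hcN hcZ hcM hY.
  by congr (_ - _ *: _); apply: ge0_conj.
have YZ : Y *m Z = 0 by rewrite /Z mulmxBr -scalemxAr YYY subrr.
have ZZ : Z *m Z = 0.
  by rewrite {1}/Z mulmxBl -mulmxA YZ -scalemxAl YZ mulmx0 scaler0 subrr.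
have Z0 : Z = 0 by apply: norm0; rewrite hZ.
have YYl : Y *m Y = lam *: Y by apply/eqP; rewrite -subr_eq0 -/Z Z0.
have tr1 : \tr (Y *m Y) = nn.
  by rewrite YY mxtrace_mulC XX mxtrace_scalar.
have lamnz : lam != 0 by apply: contra nnz => /eqP l0; rewrite -lam2 l0 expr0n.
have trY : \tr Y = lam.
  apply: (mulfI lamnz); rewrite -mxtraceZ -YYl tr1 -lam2 expr2 //.
by rewrite trY; apply: sqrtc_uniq.
Qed.

Lemma fid_rank1 n (A S : 'M[C]_n) (V : 'cV[C]_n) :
  psd S -> S *m S = A -> fidelity A (V *m hc V) = sqrtc ((hc V *m A *m V) 0 0).
Proof.
move=> pS SS.
have [pT TT] : psd (mxsqrt A) /\ mxsqrt A *m mxsqrt A = A.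
  by apply: (@xgetI _ 0 [set S0 : 'M[C]_n | psd S0 /\ S0 *m S0 = A] S).
set T := mxsqrt A in pT TT *.
set X := T *m V.
have e : T *m (V *m hc V) *m T = X *m hc X by rewrite /X hcM pT.1 !mulmxA.
rewrite /fidelity -/T e.
set nn := (hc X *m X) 0 0.
have nn0 : 0 <= nn by exact: nn_ge0.
have [pY YY] : psd (mxsqrt (X *m hc X)) /\ mxsqrt (X *m hc X) *m mxsqrt (X *m hc X) = X *m hc X.
  apply: (@xgetI _ 0 [set S0 : 'M[C]_n | psd S0 /\ S0 *m S0 = X *m hc X] ((sqrtc nn)^-1 *: (X *m hc X))); split; [split|].
  - rewrite hcZ hcM hcK; congr (_ *: _); apply: ge0_conj.
    by rewrite invr_ge0 sqrtc_ge0.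
  - move=> v; rewrite -scalemxAr -scalemxAl mxE mulr_ge0 //.
      by rewrite invr_ge0 sqrtc_ge0.
    exact: outer_ge0.
  - rewrite -scalemxAr -scalemxAl scalerA -mulmxA (mulmxA (hc X)).
    rewrite [hc X *m X]mx11_scalar -/nn mul_scalar_mx -scalemxAr scalerA.
    have [nz|nnz] := eqVneq nn 0.
      have X0 : X = 0 by apply: norm0; rewrite [hc X *m X]mx11_scalar -/nn nz raddf0.
      by rewrite X0 !mul0mx scaler0.
    by rewrite -invfM -expr2 sqr_sqrtc mulVf // scale1r.
rewrite (rank1_tr pY YY); congr sqrtc.
by rewrite /X hcM pT.1 -TT !mulmxA.
Qed.



Lemma idx_eq m n (i k : 'I_m) (j l : 'I_n) :
  (mxvec_index i j == mxvec_index k l) = (i == k) && (j == l).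
Proof.
have inj : injective (fun p : 'I_m * 'I_n => mxvec_index p.1 p.2).
  by move=> [? ?] [? ?] /= /cast_ord_inj /enum_rank_inj.
by rewrite (inj_eq inj (i, j) (k, l)).
Qed.

Lemma kronE m1 n1 m2 n2 (A : 'M[C]_(m1, n1)) (B : 'M[C]_(m2, n2)) i k j l :
  kron A B (mxvec_index i k) (mxvec_index j l) = A i j * B k l.
Proof.
rewrite /kron summxE (bigD1 i) //= [X in _ + X]big1 ?addr0; last first.
  move=> i' ne; rewrite summxE big1 // => j' _; rewrite summxE big1 // => k' _.
  by rewrite summxE big1 // => l' _; rewrite !mxE !idx_eq eq_sym (negbTE ne) mulr0.
rewrite summxE (bigD1 j) //= [X in _ + X]big1 ?addr0; last first.
  move=> j' ne; have ne' : (j == j') = false by rewrite eq_sym (negbTE ne).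
  rewrite summxE big1 // => k' _.
  by rewrite summxE big1 // => l' _; rewrite !mxE !idx_eq ne' /= ?andbF mulr0.
rewrite summxE (bigD1 k) //= [X in _ + X]big1 ?addr0; last first.
  move=> k' ne; have ne' : (k == k') = false by rewrite eq_sym (negbTE ne).
  by rewrite summxE big1 // => l' _; rewrite !mxE !idx_eq ne' /= ?andbF mulr0.
rewrite summxE (bigD1 l) //= [X in _ + X]big1 ?addr0; last first.
  move=> l' ne; have ne' : (l == l') = false by rewrite eq_sym (negbTE ne).
  by rewrite !mxE !idx_eq ne' /= ?andbF mulr0.
by rewrite !mxE !idx_eq !eqxx mulr1.
Qed.

Definition dd (k : 'I_2) : 'I_(2 * 2) := mxvec_index k k.
Definition Emx : 'M[C]_(2 * 2, 2) := \matrix_(j, k) (j == dd k)%:R.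
Definition emb (M : 'M[C]_2) : 'M[C]_(2 * 2) := Emx *m M *m hc Emx.
Definition embv (v : 'cV[C]_2) : 'cV[C]_(2 * 2) := Emx *m v.
Definition psiF (al : 'I_2 -> C) : 'cV[C]_(2 * (2 * 2)) := \sum_(k < 2) al k *: ket3 R k k k.
Definition vvec (p : 'cV[C]_2) (al : 'I_2 -> C) : 'cV[C]_2 := \col_k (conjc (p k 0) * al k).

Lemma big2 (V : nmodType) (F : 'I_2 -> V) : \sum_(i < 2) F i = F ord0 + F ord_max.
Proof. by rewrite big_ord_recl big_ord1; congr (_ + F _); apply/val_inj. Qed.

Lemma cM (x y : C) : conjc (x * y) = conjc x * conjc y. Proof. exact: rmorphM. Qed.
Lemma cD (x y : C) : conjc (x + y) = conjc x + conjc y. Proof. exact: rmorphD. Qed.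
Lemma cN (x : C) : conjc (- x) = - conjc x. Proof. exact: rmorphN. Qed.
Lemma cV (x : C) : conjc (x^-1) = (conjc x)^-1. Proof. exact: conjc_inv. Qed.
Lemma cn n : conjc (n%:R : C) = n%:R. Proof. exact: conjc_nat. Qed.
Lemma cK (x : C) : conjc (conjc x) = x. Proof. exact: conjcK. Qed.

Lemma big2C (F : 'I_2 -> C) : \sum_(i < 2) F i = F ord0 + F ord_max.
Proof. exact: big2. Qed.

Lemma af_eq (s t : 'I_3 -> 'I_2 -> 'M[C]_(2 * 2)) (v0 v1 v2 : C) :
  \sum_(a < 2) fidelity (s (inord 0) a) (t (inord 0) a) = v0 ->
  \sum_(a < 2) fidelity (s (inord 1) a) (t (inord 1) a) = v1 ->
  \sum_(a < 2) fidelity (s (inord 2) a) (t (inord 2) a) = v2 ->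
  assemblage_fidelity s t = Num.min v0 (Num.min v1 v2).
Proof. by move=> h0 h1 h2; rewrite /assemblage_fidelity h0 h1 h2. Qed.

Lemma hcE' m n (M : 'M[C]_(m, n)) i j : hc M i j = conjc (M j i).
Proof. by rewrite /hc !mxE. Qed.

Lemma psiE al i l : psiF al (mxvec_index i l) 0 = al i * (l == dd i)%:R.
Proof.
rewrite /psiF summxE (bigD1 i) //= big1 => [|k ne].
  by rewrite !mxE idx_eq eqxx /= eqxx andbT; exact: addr0.
have ne' : (i == k) = false by rewrite eq_sym (negbTE ne).
by rewrite !mxE idx_eq ne' /= mulr0.
Qed.

Lemma kronP1_psi (P : 'M[C]_2) al i j :
  (kron P (1%:M : 'M[C]_(2 * 2)) *m psiF al) (mxvec_index i j) 0 =
  \sum_(k < 2) al k * P i k * (j == dd k)%:R.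
Proof.
rewrite /psiF mulmx_sumr summxE; apply: eq_bigr => k _.
by rewrite -scalemxAr mxE /ket3 -colE mxE kronE mxE mulrA [al k * _]mulrC.
Qed.

Lemma scmxE m n a (M : 'M[C]_(m, n)) i j : (a *: M) i j = a * M i j.
Proof. by rewrite mxE. Qed.

Lemma outerE m (u w : 'cV[C]_m) r s : (u *m hc w) r s = u r 0 * conjc (w s 0).
Proof. by rewrite mxE big_ord1 hcE'. Qed.

Lemma embE M j l : emb M j l = \sum_(k < 2) \sum_(m < 2) (j == dd k)%:R * M k m * (l == dd m)%:R.
Proof.
rewrite /emb mxE exchange_big; apply: eq_bigr => m _.
rewrite mxE mulr_suml; apply: eq_bigr => k _.
by rewrite hcE' !mxE cn.
Qed.

Lemma assemblage_emb (lam : C) (al : 'I_2 -> C) (p : 'cV[C]_2) x a :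
  proj R a x = lam *: (p *m hc p) ->
  assemblage (psiF al) x a = emb (lam *: (vvec p al *m hc (vvec p al))).
Proof.
move=> hP; apply/matrixP => j l.
rewrite /assemblage mulmxA /ptrace1 mxE embE.
under eq_bigr => i _ do rewrite outerE kronP1_psi psiE.
rewrite hP !big2 !scmxE !outerE !mxE !cM !cn !cK.
ring.
Qed.


Lemma ord2 (i : 'I_2) : i = ord0 \/ i = ord_max.
Proof. by case: i => [[|[|//]] ?]; [left|right]; apply/val_inj. Qed.

Lemma EE : hc Emx *m Emx = 1%:M.
Proof.
apply/matrixP => k m; rewrite !mxE (bigD1 (dd k)) //= big1 => [|j /negbTE jn].
  by rewrite hcE' !mxE eqxx cn mul1r addr0 /dd idx_eq andbb.
by rewrite hcE' !mxE jn cn mul0r.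
Qed.

Lemma emb_mul M N : emb M *m emb N = emb (M *m N).
Proof.
by rewrite /emb !mulmxA -(mulmxA _ (hc Emx)) EE mulmx1.
Qed.

Lemma hc_emb M : hc (emb M) = emb (hc M).
Proof. by rewrite /emb !hcM hcK mulmxA. Qed.

Lemma quad_emb (v : 'cV[C]_2) M : hc (embv v) *m emb M *m embv v = hc v *m M *m v.
Proof.
rewrite /emb /embv hcM !mulmxA -(mulmxA _ (hc Emx)) EE mulmx1.
by rewrite -(mulmxA _ (hc Emx)) EE mulmx1.
Qed.

Lemma psd_emb M : psd M -> psd (emb M).
Proof.
move=> [hM pM]; split; first by rewrite hc_emb hM.
move=> v; have := pM (hc Emx *m v).
by rewrite /emb hcM hcK !mulmxA.
Qed.

Lemma emb_outer (v : 'cV[C]_2) : emb (v *m hc v) = embv v *m hc (embv v).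
Proof. by rewrite /emb /embv hcM !mulmxA. Qed.

Lemma embD M N : emb (M + N) = emb M + emb N.
Proof. by rewrite /emb mulmxDr mulmxDl. Qed.

Lemma embZ a M : emb (a *: M) = a *: emb M.
Proof. by rewrite /emb -scalemxAr -scalemxAl. Qed.

Lemma CH2 (M : 'M[C]_2) :
  M *m M = (M ord0 ord0 + M ord_max ord_max) *: M -
    (M ord0 ord0 * M ord_max ord_max - M ord0 ord_max * M ord_max ord0)%:M.
Proof.
apply/matrixP => i j; rewrite !mxE !big2.
case: (ord2 i) => ->; case: (ord2 j) => ->; rewrite /= ?mulr1 ?mulr0; ring.
Qed.

Lemma sq_shift (M : 'M[C]_2) d :
  d * d = M ord0 ord0 * M ord_max ord_max - M ord0 ord_max * M ord_max ord0 ->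
  (M + d%:M) *m (M + d%:M) = (M ord0 ord0 + M ord_max ord_max + 2 * d) *: M.
Proof.
move=> Hd; rewrite mulmxDl !mulmxDr (CH2 M) mul_mx_scalar !mul_scalar_mx -Hd.
by apply/matrixP => i j; rewrite !mxE; ring.
Qed.

Lemma quad_lin (v : 'cV[C]_2) (a b : C) (A B : 'M[C]_2) :
  (hc v *m (a *: A + b *: B) *m v) 0 0 = a * (hc v *m A *m v) 0 0 + b * (hc v *m B *m v) 0 0.
Proof.
by rewrite mulmxDr mulmxDl -!scalemxAr -!scalemxAl !mxE.
Qed.

Lemma sqrt2x2 (al be : C) (w u : 'cV[C]_2) : 0 <= al -> 0 <= be ->
  exists S, psd S /\ S *m S = al *: (w *m hc w) + be *: (u *m hc u).
Proof.
move=> al0 be0.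
set M := al *: (w *m hc w) + be *: (u *m hc u).
have hM : hc M = M.
  rewrite /M hcD !hcZ !hcM !hcK.
  by congr (_ *: _ + _ *: _); apply: ge0_conj.
have pM : forall v : 'cV[C]_2, 0 <= (hc v *m M *m v) 0 0.
  move=> v; rewrite /M quad_lin addr_ge0 // mulr_ge0 //; exact: outer_ge0.
have ME i j : M i j = al * (w i 0 * conjc (w j 0)) + be * (u i 0 * conjc (u j 0)).
  by rewrite /M !mxE !big_ord1 !hcE'.
set det := M ord0 ord0 * M ord_max ord_max - M ord0 ord_max * M ord_max ord0.
set tr := M ord0 ord0 + M ord_max ord_max.
have det0 : 0 <= det.
  set z := w ord0 0 * u ord_max 0 - w ord_max 0 * u ord0 0.
  have -> : det = al * be * (z * conjc z).
    by rewrite /det !ME /z !cD !cN !cM; ring.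
  by apply: mulr_ge0; [exact: mulr_ge0 | exact: mulcJ_ge0].
have tr0 : 0 <= tr.
  by rewrite /tr !ME; apply: addr_ge0; apply: addr_ge0; apply: mulr_ge0 => //; exact: mulcJ_ge0.
set dl := sqrtc det.
have dl0 : 0 <= dl by rewrite sqrtc_ge0.
have dl2 : dl * dl = det by rewrite -expr2 sqr_sqrtc.
set t := sqrtc (tr + 2 * dl).
have t0 : 0 <= t by rewrite sqrtc_ge0 addr_ge0 // mulr_ge0 // ler0n.
exists (t^-1 *: (M + dl%:M)); split; [split|].
- rewrite hcZ hcD hM -scalemx1 hcZ hc1 (ge0_conj dl0) (ge0_conj (x := t^-1)) //.
  by rewrite invr_ge0.
- move=> v; rewrite -scalemxAr -scalemxAl mxE mulr_ge0 ?invr_ge0 //.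
  rewrite -scalemx1 -{1}[M]scale1r quad_lin mul1r addr_ge0 ?pM // mulr_ge0 // mulmx1.
  exact: nn_ge0.
- have e : (M + dl%:M) *m (M + dl%:M) = (tr + 2 * dl) *: M.
    by rewrite sq_shift.
  rewrite -scalemxAl -scalemxAr scalerA e scalerA.
  have [z|nz] := eqVneq (tr + 2 * dl) 0.
    move/eqP: z; rewrite paddr_eq0 ?mulr_ge0 ?ler0n // mulf_eq0 pnatr_eq0 orFb.
    move=> /andP [/eqP trz /eqP dlz].
    have M0 : M = 0.
      apply: norm0; rewrite hM (CH2 M) -/det -/tr trz -dl2 dlz mulr0 scale0r sub0r.
      by apply/matrixP => i j; rewrite !mxE mul0rn oppr0.
    by rewrite M0 scaler0.
  by rewrite /t -invfM -expr2 sqr_sqrtc mulVf // scale1r.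
Qed.

Definition pb (p : 'cV[C]_2) : 'cV[C]_2 := \col_k conjc (p k 0).
Definition gr : C := ((Num.sqrt (2 : R))^-1)%:C.

Lemma vvec_const p g : vvec p (fun _ => g) = g *: pb p.
Proof. by apply/matrixP => i j; rewrite !mxE mulrC. Qed.

Lemma ghz_psi : psi_GHZ R = psiF (fun _ => gr).
Proof. by rewrite /psi_GHZ /psiF big2 scalerDr. Qed.

Lemma gg : gr * conjc gr = 2^-1.
Proof.
rewrite /gr conjc_real -rmorphM -invfM -expr2 sqr_sqrtr ?ler0n //.
by rewrite fmorphV rmorph_nat.
Qed.

Lemma fid_scaled n (A S : 'M[C]_n) (V : 'cV[C]_n) b : 0 <= b -> psd S -> S *m S = A ->
  fidelity A (b *: (V *m hc V)) = sqrtc (b * (hc V *m A *m V) 0 0).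
Proof.
move=> b0 pS SS.
have cb : conjc (sqrtc b) = sqrtc b by apply: ge0_conj; rewrite sqrtc_ge0.
have e : (sqrtc b *: V) *m hc (sqrtc b *: V) = b *: (V *m hc V).
  by rewrite hcZ cb -scalemxAl -scalemxAr scalerA -expr2 sqr_sqrtc.
have e2 : (hc (sqrtc b *: V) *m A *m (sqrtc b *: V)) 0 0 = b * (hc V *m A *m V) 0 0.
  by rewrite hcZ cb -!scalemxAl -!scalemxAr scalerA scmxE -expr2 sqr_sqrtc.
by rewrite -e -e2; exact: (fid_rank1 _ pS SS).
Qed.

Lemma quad_outer (v w : 'cV[C]_2) :
  (hc v *m (w *m hc w) *m v) 0 0 = (hc v *m w) 0 0 * conjc ((hc v *m w) 0 0).
Proof.
rewrite mulmxA -mulmxA mxE big_ord1; congr (_ * _).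
by rewrite -hcE' hcM hcK.
Qed.

Lemma fid_case (lam : C) (p : 'cV[C]_2) (al : 'I_2 -> C) (Ps Pf : C) x a :
  0 <= lam -> 0 <= Ps -> 0 <= Pf -> proj R a x = lam *: (p *m hc p) ->
  let Np := p ord0 0 * conjc (p ord0 0) + p ord_max 0 * conjc (p ord_max 0) in
  let X := p ord0 0 * conjc (p ord0 0) * al ord0 + p ord_max 0 * conjc (p ord_max 0) * al ord_max in
  fidelity (Ps *: assemblage (psi_GHZ R) x a + Pf *: assemblage (psiF al) x a)
    (assemblage (psi_GHZ R) x a) =
  sqrtc (lam / 2 * (Ps * (lam / 2) * (Np * conjc Np) + Pf * lam * (X * conjc X))).
Proof.
move=> lam0 Ps0 Pf0 hP Np X.
rewrite ghz_psi !(@assemblage_emb lam _ p x a hP) vvec_const.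
have e1 : lam *: ((gr *: pb p) *m hc (gr *: pb p)) = (lam / 2) *: (pb p *m hc (pb p)).
  by rewrite hcZ -scalemxAl -scalemxAr !scalerA -mulrA gg.
rewrite e1 -!embZ -embD !scalerA.
set w := pb p; set u := vvec p al.
have l20 : 0 <= lam / 2 by rewrite divr_ge0 ?ler0n.
have [S [pS SS]] := sqrt2x2 w u (mulr_ge0 Ps0 l20) (mulr_ge0 Pf0 lam0).
rewrite embZ emb_outer (fid_scaled _ l20 (psd_emb pS)); last by rewrite emb_mul SS.
rewrite quad_emb quad_lin !quad_outer.
have hw : (hc w *m w) 0 0 = Np.
  by rewrite mxE big2 !hcE' !mxE !cK.
have hu : (hc w *m u) 0 0 = X.
  by rewrite mxE big2 !hcE' !mxE !cK !mulrA.
by rewrite hw hu.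
Qed.

Definition p01 (z : C) : 'cV[C]_2 := \col_k (if k == ord0 then 1 else z).
Definition pe (a : 'I_2) : 'cV[C]_2 := \col_k (k == a)%:R.

Lemma ci : conjc 'i = - 'i :> C.
Proof. by apply/eqP; rewrite eq_complex /= oppr0 !eqxx. Qed.

Lemma pauli0 : pauli R (inord 0) = sigma_x R.
Proof. by rewrite /pauli (_ : val (inord 0 : 'I_3) = 0%N) //; exact: inordK. Qed.
Lemma pauli1 : pauli R (inord 1) = sigma_y R.
Proof. by rewrite /pauli (_ : val (inord 1 : 'I_3) = 1%N) //; exact: inordK. Qed.
Lemma pauli2 : pauli R (inord 2) = sigma_z R.
Proof. by rewrite /pauli (_ : val (inord 2 : 'I_3) = 2%N) //; exact: inordK. Qed.

Lemma e01 : (ord0 == ord_max :> 'I_2) = false. Proof. by []. Qed.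
Lemma e10 : (ord_max == ord0 :> 'I_2) = false. Proof. by []. Qed.

Lemma iT T (x y : T) : (if true then x else y) = x. Proof. by []. Qed.
Lemma iF T (x y : T) : (if false then x else y) = y. Proof. by []. Qed.
Lemma sg0 : (-1) ^+ (ord0 : 'I_2) = 1 :> C. Proof. by []. Qed.
Lemma sg1 : (-1) ^+ (ord_max : 'I_2) = -1 :> C. Proof. by rewrite /= expr1. Qed.
Lemma b1 : (true%:R : C) = 1. Proof. by []. Qed.
Lemma b0 : (false%:R : C) = 0. Proof. by []. Qed.

Lemma proj_x a : proj R a (inord 0) = (2^-1 : C) *: (p01 ((-1) ^+ a) *m hc (p01 ((-1) ^+ a))).
Proof.
apply/matrixP => i j; rewrite /proj pauli0 /sigma_x !scmxE outerE !mxE.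
case: (ord2 a) => ->; case: (ord2 i) => ->; case: (ord2 j) => ->.
all: rewrite /q0 /q1 ?eqxx ?e01 ?e10 ?iT ?iF ?andbT ?andbF ?sg0 ?sg1 ?b1 ?b0 ?cN ?conjc1; ring.
Qed.

Lemma zi1 : (1 * 'i) * conjc (1 * 'i) = 1 :> C.
Proof. by simpc. Qed.
Lemma zi2 : (-1 * 'i) * conjc (-1 * 'i) = 1 :> C.
Proof. by simpc. Qed.

Lemma proj_y a : proj R a (inord 1) = (2^-1 : C) *: (p01 ((-1) ^+ a * 'i) *m hc (p01 ((-1) ^+ a * 'i))).
Proof.
apply/matrixP => i j; rewrite /proj pauli1 /sigma_y !scmxE outerE !mxE.
case: (ord2 a) => ->; case: (ord2 i) => ->; case: (ord2 j) => ->.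
all: rewrite /q0 /q1 ?eqxx ?e01 ?e10 ?iT ?iF ?andbT ?andbF ?sg0 ?sg1 ?b1 ?b0 ?zi1 ?zi2 ?cM ?cN ?conjc1 ?ci; ring.
Qed.

Lemma proj_z a : proj R a (inord 2) = (1 : C) *: (pe a *m hc (pe a)).
Proof.
apply/matrixP => i j; rewrite /proj pauli2 /sigma_z !scmxE outerE !mxE.
case: (ord2 a) => ->; case: (ord2 i) => ->; case: (ord2 j) => ->.
all: rewrite /q0 /q1 ?eqxx ?e01 ?e10 ?iT ?iF ?andbT ?andbF ?sg0 ?sg1 ?b1 ?b0 ?cN ?conjc1 ?conjc0; by field; rewrite ?pnatr_eq0.
Qed.

Definition alU (c s : R) : 'I_2 -> C := fun k => if k == ord0 then c%:C else s%:C.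

Lemma sqrtcE' (E : C) (y : R) : 0 <= y -> E = (y ^+ 2)%:C -> sqrtc E = y%:C.
Proof. by move=> y0 ->; symmetry; apply: sqrtc_uniq; rewrite ?ler0c // rmorphXn. Qed.

Lemma half_ge0 : 0 <= (2^-1 : C). Proof. by rewrite invr_ge0 ler0n. Qed.

Lemma fx0 a (Ps Pf c s : R) : 0 <= Ps -> 0 <= Pf -> 0 <= Ps + Pf * (c + s) ^+ 2 / 2 ->
  fidelity (Ps%:C *: assemblage (psi_GHZ R) (inord 0) a + Pf%:C *: assemblage (psiF (alU c s)) (inord 0) a)
    (assemblage (psi_GHZ R) (inord 0) a) = (2^-1 * Num.sqrt (Ps + Pf * (c + s) ^+ 2 / 2))%:C.
Proof.
move=> Ps0 Pf0 K0.
have Ps0' : 0 <= Ps%:C by rewrite ler0c.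
have Pf0' : 0 <= Pf%:C by rewrite ler0c.
rewrite (@fid_case _ _ (alU c s) _ _ _ _ half_ge0 Ps0' Pf0' (proj_x a)) /=.
apply: sqrtcE'; first by rewrite mulr_ge0 ?invr_ge0 ?ler0n ?sqrtr_ge0.
rewrite !mxE /alU ?eqxx ?e10 ?iT ?iF.
case: (ord2 a) => ->; rewrite ?sg0 ?sg1 !cD !cM ?cN ?conjc1 ?conjc_real ?cn.
all: rewrite exprMn sqr_sqrtr // !(rmorphM, rmorphD, rmorphXn, fmorphV, rmorph_nat).
all: by field; rewrite ?pnatr_eq0.
Qed.

Lemma fx1 a (Ps Pf c s : R) : 0 <= Ps -> 0 <= Pf -> 0 <= Ps + Pf * (c + s) ^+ 2 / 2 ->
  fidelity (Ps%:C *: assemblage (psi_GHZ R) (inord 1) a + Pf%:C *: assemblage (psiF (alU c s)) (inord 1) a)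
    (assemblage (psi_GHZ R) (inord 1) a) = (2^-1 * Num.sqrt (Ps + Pf * (c + s) ^+ 2 / 2))%:C.
Proof.
move=> Ps0 Pf0 K0.
have Ps0' : 0 <= Ps%:C by rewrite ler0c.
have Pf0' : 0 <= Pf%:C by rewrite ler0c.
rewrite (@fid_case _ _ (alU c s) _ _ _ _ half_ge0 Ps0' Pf0' (proj_y a)) /=.
apply: sqrtcE'; first by rewrite mulr_ge0 ?invr_ge0 ?ler0n ?sqrtr_ge0.
rewrite !mxE /alU ?eqxx ?e10 ?iT ?iF.
case: (ord2 a) => ->; rewrite ?sg0 ?sg1 ?zi1 ?zi2 !cD !cM ?cN ?conjc1 ?conjc_real ?cn.
all: rewrite exprMn sqr_sqrtr // !(rmorphM, rmorphD, rmorphXn, fmorphV, rmorph_nat).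
all: by field; rewrite ?pnatr_eq0.
Qed.

Lemma fx2 (a : 'I_2) (Ps Pf c s : R) : 0 <= Ps -> 0 <= Pf ->
  fidelity (Ps%:C *: assemblage (psi_GHZ R) (inord 2) a + Pf%:C *: assemblage (psiF (alU c s)) (inord 2) a)
    (assemblage (psi_GHZ R) (inord 2) a) =
  (Num.sqrt (2^-1 * (Ps / 2 + Pf * (if a == ord0 then c else s) ^+ 2)))%:C.
Proof.
move=> Ps0 Pf0.
have Ps0' : 0 <= Ps%:C by rewrite ler0c.
have Pf0' : 0 <= Pf%:C by rewrite ler0c.
rewrite (@fid_case _ _ (alU c s) _ _ _ _ ler01 Ps0' Pf0' (proj_z a)) /=.
have K0 : 0 <= 2^-1 * (Ps / 2 + Pf * (if a == ord0 then c else s) ^+ 2).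
  apply: mulr_ge0; first by rewrite invr_ge0 ler0n.
  apply: addr_ge0; first by rewrite divr_ge0 ?ler0n.
  by apply: mulr_ge0; rewrite // sqr_ge0.
apply: sqrtcE'; first by rewrite sqrtr_ge0.
rewrite sqr_sqrtr //.
rewrite !mxE /alU.
case: (ord2 a) => ->; rewrite ?eqxx ?e01 ?e10 ?iT ?iF ?b1 ?b0 !cD !cM ?cN ?conjc1 ?conjc0 ?conjc_real ?cn.
all: rewrite !(rmorphM, rmorphD, rmorphXn, fmorphV, rmorph_nat).
all: by field; rewrite ?pnatr_eq0.
Qed.

Lemma key (Ps Pf c s : R) : 0 <= Ps -> 0 <= Pf -> 0 <= c -> 0 <= s -> c ^+ 2 + s ^+ 2 = 1 ->
  Num.sqrt (Ps + Pf * (c + s) ^+ 2 / 2) <=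
  Num.sqrt (2^-1 * (Ps / 2 + Pf * c ^+ 2)) + Num.sqrt (2^-1 * (Ps / 2 + Pf * s ^+ 2)).
Proof.
move=> Ps0 Pf0 c0 s0 cs2.
set A := 2^-1 * (Ps / 2 + Pf * c ^+ 2); set B := 2^-1 * (Ps / 2 + Pf * s ^+ 2).
have A0 : 0 <= A by rewrite /A mulr_ge0 ?invr_ge0 ?ler0n // addr_ge0 ?divr_ge0 ?ler0n // mulr_ge0 // sqr_ge0.
have B0 : 0 <= B by rewrite /B mulr_ge0 ?invr_ge0 ?ler0n // addr_ge0 ?divr_ge0 ?ler0n // mulr_ge0 // sqr_ge0.
set a := Num.sqrt A; set b := Num.sqrt B.
have a0 : 0 <= a by apply: sqrtr_ge0.
have b0 : 0 <= b by apply: sqrtr_ge0.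
have a2 : a ^+ 2 = A by apply: sqr_sqrtr.
have b2 : b ^+ 2 = B by apply: sqr_sqrtr.
set u := Ps / 2 + Pf * c * s.
have u0 : 0 <= u by rewrite /u addr_ge0 ?divr_ge0 ?ler0n // !mulr_ge0.
have hu : u <= 2 * a * b.
  rewrite -(@ler_pXn2r _ 2) // ?nnegrE ?mulr_ge0 ?ler0n //.
  rewrite !exprMn a2 b2 /A /B -subr_ge0.
  have -> : 2 ^+ 2 * (2^-1 * (Ps / 2 + Pf * c ^+ 2)) * (2^-1 * (Ps / 2 + Pf * s ^+ 2)) - u ^+ 2
      = Ps * Pf * (c - s) ^+ 2 / 2 by rewrite /u; field.
  by apply: divr_ge0; [apply: mulr_ge0; [exact: mulr_ge0 | exact: sqr_ge0] | exact: ler0n].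
have hK : Ps + Pf * (c + s) ^+ 2 / 2 = A + B + u.
  by rewrite /A /B /u; field.
rewrite -(ger0_norm (addr_ge0 a0 b0)) -sqrtr_sqr ler_sqrt ?sqr_ge0 //.
rewrite hK sqrrD a2 b2.
lra.
Qed.

Lemma main_aux (theta : R) (N : nat) :
  0 < theta < pi / 4 -> (2 <= N)%N ->
  assemblage_fidelity (sigma_dist theta N) (@sigma_GHZ R) =
  (Num.sqrt (1 - 2^-1 * (1 - sin (2 * theta)) * cos (2 * theta) ^+ (N.-1)))%:C.
Proof.
move=> /andP [t0 t1] N2.
have pi0 : 0 < pi :> R := pi_gt0 R.
have s0 : 0 <= sin theta by apply: sin_ge0_pi; apply/andP; split; lra.
have c0 : 0 <= cos theta by apply: cos_ge0_pihalf; apply/andP; split; lra.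
have cs2 : cos theta ^+ 2 + sin theta ^+ 2 = 1 := cos2Dsin2 theta.
have e2 : 2 * theta = theta + theta by rewrite mulr_natl mulr2n.
have cos2 : cos (2 * theta) = 1 - 2 * sin theta ^+ 2.
  by rewrite e2 cosD -!expr2 cos2sin2; ring.
have sin2 : sin (2 * theta) = 2 * sin theta * cos theta by rewrite e2 sinD; ring.
have c2 : 0 <= cos (2 * theta) by apply: cos_ge0_pihalf; apply/andP; split; lra.
set Pf := P_fail theta N.
have PfE : Pf = cos (2 * theta) ^+ N.-1 by rewrite /Pf /P_fail cos2.
have Pf0 : 0 <= Pf by rewrite PfE exprn_ge0.
have Pf1 : Pf <= 1.
  rewrite PfE exprn_ile1 // cos2; have := sqr_ge0 (sin theta); lra.
have Ps0 : 0 <= 1 - Pf by rewrite subr_ge0.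
have gz : psi_GGHZ theta = psiF (alU (cos theta) (sin theta)).
  rewrite /psi_GGHZ /psiF big2 /alU eqxx e10 /q0 /q1.
  apply/matrixP => i j; rewrite !mxE.
  reflexivity.
have distE : forall x a, sigma_dist theta N x a =
    (1 - Pf)%:C *: assemblage (psi_GHZ R) x a + Pf%:C *: assemblage (psiF (alU (cos theta) (sin theta))) x a.
  move=> x a; rewrite /sigma_dist /sigma_GHZ /sigma_GGHZ /P_success -/Pf gz.
  reflexivity.
have K0 : 0 <= (1 - Pf) + Pf * (cos theta + sin theta) ^+ 2 / 2.
  by rewrite addr_ge0 // divr_ge0 ?ler0n // mulr_ge0 // sqr_ge0.
set K := (1 - Pf) + Pf * (cos theta + sin theta) ^+ 2 / 2.
set A := 2^-1 * ((1 - Pf) / 2 + Pf * cos theta ^+ 2).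
set B := 2^-1 * ((1 - Pf) / 2 + Pf * sin theta ^+ 2).
have f0 : forall a, fidelity (sigma_dist theta N (inord 0) a) (sigma_GHZ R (inord 0) a) = (2^-1 * Num.sqrt K)%:C.
  by move=> a; rewrite distE /sigma_GHZ; exact: fx0.
have f1 : forall a, fidelity (sigma_dist theta N (inord 1) a) (sigma_GHZ R (inord 1) a) = (2^-1 * Num.sqrt K)%:C.
  by move=> a; rewrite distE /sigma_GHZ; exact: fx1.
have f2 : forall a, fidelity (sigma_dist theta N (inord 2) a) (sigma_GHZ R (inord 2) a) =
    (Num.sqrt (2^-1 * ((1 - Pf) / 2 + Pf * (if a == ord0 then cos theta else sin theta) ^+ 2)))%:C.
  by move=> a; rewrite distE /sigma_GHZ; exact: fx2.
have hh : forall y : R, 2^-1 * y + 2^-1 * y = y by move=> y; field.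
have g0 : \sum_(a < 2) fidelity (sigma_dist theta N (inord 0) a) (sigma_GHZ R (inord 0) a) = (Num.sqrt K)%:C.
  rewrite (eq_bigr (fun _ => (2^-1 * Num.sqrt K)%:C)); last by move=> a _; exact: f0.
  by rewrite big2C -rmorphD hh.
have g1 : \sum_(a < 2) fidelity (sigma_dist theta N (inord 1) a) (sigma_GHZ R (inord 1) a) = (Num.sqrt K)%:C.
  rewrite (eq_bigr (fun _ => (2^-1 * Num.sqrt K)%:C)); last by move=> a _; exact: f1.
  by rewrite big2C -rmorphD hh.
have g2 : \sum_(a < 2) fidelity (sigma_dist theta N (inord 2) a) (sigma_GHZ R (inord 2) a) =
    (Num.sqrt A + Num.sqrt B)%:C.
  rewrite (eq_bigr (fun a : 'I_2 => (Num.sqrt (2^-1 * ((1 - Pf) / 2 + Pf * (if a == ord0 then cos theta else sin theta) ^+ 2)))%:C)); last by move=> a _; exact: f2.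
  by rewrite big2C -rmorphD eqxx e10.
rewrite (af_eq g0 g1 g2).
have yz := key Ps0 Pf0 c0 s0 cs2.
rewrite [X in Num.min _ X]Order.POrderTheory.min_l; last by rewrite lecR.
rewrite Order.POrderTheory.min_l //.
congr (_%:C); congr Num.sqrt.
have cs : (cos theta + sin theta) ^+ 2 = 1 + 2 * sin theta * cos theta.
  by rewrite sqrrD addrAC cs2; ring.
rewrite /K cs -PfE sin2; by field; rewrite ?pnatr_eq0.
Qed.


End S.

Theorem theorem1 (R : realType) (theta : R) (N : nat) :
  0 < theta < pi / 4 -> (2 <= N)%N ->
  assemblage_fidelity (sigma_dist theta N) (@sigma_GHZ R) =
  (Num.sqrt (1 - 2^-1 * (1 - sin (2 * theta)) * cos (2 * theta) ^+ (N.-1)))%:C.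
Proof. exact: main_aux. Qed.
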